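(* Let $L$ be a finite distributive lattice and $K=[\hat0_K,\hat1_K]$ a cutting of $L$. Then $$R(L\boxplus K,x)=\begin{cases}R(L,x)+x^{h_L(\hat0_K)+1}R(K,x), & \text{if }\hat1_K=\hat1_L;\\ R(K,x)+x\,R(L,x), &\text{if }\hat0_K=\hat0_L.\end{cases}$$
   Context: For a finite poset $P$, $\mathcal{F}(P)$ is the set of filters (up-sets) of $P$ ordered by reverse inclusion; every finite distributive lattice $L$ is isomorphic to some $\mathcal{F}(P)$; $\hat0_L,\hat1_L$ denote the least and greatest elements of $L$. A cutting of $L$ is an interval $K=[\hat0_K,\hat1_K]$ of $L$ such that every maximal chain of $L$ meets $K$. For a cutting $K$ of $L=\mathcal{F}(P)$, let $S=\hat0_K\setminus\hat1_K$, $S_0$ the set of maximal elements of $P\setminus\hat0_K$, $S_1$ the set of minimal elements of $\hat1_K$. The poset $P_K$ is $P\cup\{x_K\}$ ($x_K$ new) where the order on $P$ is unchanged, $z<x_K$ iff $z\le s$ for some $s\in S_0$, $x_K<y$ iff $y\ge s$ for some $s\in S_1$, and $x_K$ is incomparable to every element of $S$. The convex expansion is $L\boxplus K:=\mathcal{F}(P_K)$. For a finite distributive lattice $M$ and $a\in M$, $h_M(a)$ is the height of $a$ in $M$, and $R(M,x)=\sum_{a\in M}x^{h_M(a)}$ is the rank generating function. *)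

(* Defs.v *)
From HB Require Import structures.
From mathcomp Require Import all_boot all_order all_algebra.
Set Implicit Arguments. Unset Strict Implicit. Unset Printing Implicit Defensive.
Import Order.TTheory GRing.Theory.

Section GenericPoset.
Variable T : finType.

Definition is_chain (A : {set T}) (le : rel T) (C : {set T}) : bool :=
  (C \subset A) && [forall x in C, forall y in C, le x y || le y x].

Definition is_maximal_chain (A : {set T}) (le : rel T) (C : {set T}) : bool :=
  is_chain A le C &&
  [forall D : {set T}, (is_chain A le D && (C \subset D)) ==> (D \subset C)].

Definition height (A : {set T}) (le : rel T) (a : T) : nat :=
  (\max_(C : {set T} | is_chain A le C && [forall c in C, le c a]) #|C|).-1.

Definition rank_gen (A : {set T}) (le : rel T) : {poly int} :=
  \sum_(a in A) 'X^(height A le a).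

Definition filters (le : rel T) : {set {set T}} :=
  [set U : {set T} | [forall x in U, forall y, le x y ==> (y \in U)]].

End GenericPoset.

(** Reverse inclusion: the order on F(P). *)
Definition revincl (T : finType) : rel {set T} := fun a b => b \subset a.

Section Expansion.
Variables (d : Order.disp_t) (P : finPOrderType d).

(** L = F(P). *)
Definition FL : {set {set P}} := filters (fun x y : P => (x <= y)%O).

(** The lat_interval [k0, k1] of L (k0 <= k1 means k1 \subset k0). *)
Definition lat_interval (k0 k1 : {set P}) : {set {set P}} :=
  [set a in FL | revincl k0 a && revincl a k1].

Definition is_cutting (k0 k1 : {set P}) : Prop :=
  [/\ k0 \in FL, k1 \in FL, revincl k0 k1 &
      forall C : {set {set P}}, is_maximal_chain FL (@revincl P) C ->
        exists2 a, a \in C & a \in lat_interval k0 k1].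

Definition S0 (k0 : {set P}) : {set P} :=
  [set s | (s \notin k0) && [forall t, ((s < t)%O && (t \notin k0)) ==> false]].
Definition S1 (k1 : {set P}) : {set P} :=
  [set s | (s \in k1) && [forall t, ((t < s)%O && (t \in k1)) ==> false]].

(** The relation on P_K = P + {x_K}; x_K is represented by None.
    (x_K is automatically incomparable to the elements of S = k0 \ k1.) *)
Definition relPK (k0 k1 : {set P}) : rel (option P) := fun u v =>
  match u, v with
  | Some z, Some y => (z <= y)%O
  | Some z, None => [exists s in S0 k0, (z <= s)%O]
  | None, Some y => [exists s in S1 k1, (s <= y)%O]
  | None, None => true
  end.

Definition convex_expansion (k0 k1 : {set P}) : {set {set option P}} :=
  filters (relPK k0 k1).

End Expansion.

(* Main.v *)
Require Import Defs.
From HB Require Import structures.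
From mathcomp Require Import all_boot all_order all_algebra.
Import Order.TTheory GRing.Theory.
Local Open Scope ring_scope.
From mathcomp Require Import zify.
Local Open Scope nat_scope.

Section Gen.
Variable T : finType.
Variable le : rel T.

Lemma filterP (U : {set T}) :
  reflect (forall x y, x \in U -> le x y -> y \in U) (U \in filters le).
Proof.
rewrite inE; apply: (iffP forallP) => [H x y xU lxy | H x].
  by have /implyP/(_ xU)/forallP/(_ y)/implyP := H x; apply.
by apply/implyP => xU; apply/forallP => y; apply/implyP; apply: H.
Qed.

Hypothesis refl : reflexive le.
Hypothesis trans : transitive le.
Hypothesis anti : forall x y, le x y -> le y x -> x = y.

Lemma ext_filter (c b : {set T}) : c \in filters le -> b \in filters le ->
  c \subset b -> c != b -> exists2 x, x \in b :\: c & x |: c \in filters le.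
Proof.
move=> /filterP cF /filterP bF cb cnb.
have [x0 x0in] : exists x, x \in b :\: c.
  apply/set0Pn; rewrite setD_eq0; apply: contra cnb => bc.
  by rewrite eqEsubset cb bc.
case: (arg_minnP (fun x => #|[set y | le x y]|) x0in) => x xin xmin.
exists x => //; apply/filterP => u v; rewrite !inE => /orP[/eqP->|uc] luv; last first.
  by rewrite (cF u v uc luv) orbT.
case: (eqVneq v x) => [->|vx]; first by rewrite ?eqxx.
rewrite /=; case vc: (v \in c) => //; exfalso.
move: xin => /setDP[xb xc].
have vin : v \in b :\: c by apply/setDP; rewrite vc (bF x v xb luv).
have := xmin v vin.
suff : #|[set y | le v y]| < #|[set y | le x y]| by rewrite ltnNge => /negbTE ->.
apply: proper_card; rewrite properEneq; apply/andP; split.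
  apply/eqP => E; have : x \in [set y | le v y] by rewrite E inE refl.
  by rewrite inE => lvx; move: vx; rewrite (anti _ _ luv lvx) eqxx.
by apply/subsetP => y; rewrite !inE => /(trans _ _ _ luv).
Qed.

Lemma height_filters (A : {set {set T}}) (b k : {set T}) (a : {set T}) :
  b \in filters le ->
  (forall c, (c \in A) = [&& c \in filters le, c \subset b & k \subset c]) ->
  a \in A -> height A (@revincl T) a = #|b| - #|a|.
Proof.
move=> bF HA aA.
have aS : a \subset b by move: aA; rewrite HA => /and3P[].
have cab := subset_leq_card aS.
rewrite /height; apply/eqP; rewrite eqn_leq; apply/andP; split.
  rewrite -subn1 leq_subLR add1n.
  apply/bigmax_leqP => C /andP[/andP[CA /forallP Cch] /forallP Cup].
  have Csub : forall c, c \in C -> (a \subset c) && (c \subset b).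
    move=> c cC; have := Cup c; rewrite cC /= /revincl => ->.
    by have := subsetP CA c cC; rewrite HA => /and3P[].
  rewrite cardE -(size_map (fun c : {set T} => #|c|)).
  have -> : (#|b| - #|a|).+1 = size (iota #|a| (#|b| - #|a|).+1) by rewrite size_iota.
  apply: uniq_leq_size.
    rewrite map_inj_in_uniq ?enum_uniq // => c1 c2; rewrite !mem_enum => c1C c2C E.
    have := Cch c1; rewrite c1C /= => /forallP /(_ c2); rewrite c2C /= /revincl.
    case/orP => S.
      by apply/eqP; rewrite eq_sym eqEcard S E leqnn.
    by apply/eqP; rewrite eqEcard S E leqnn.
  move=> n /mapP[c]. rewrite mem_enum => cC ->. rewrite mem_iota.
  have /andP[ac cb'] := Csub c cC.
  rewrite (subset_leq_card ac) /=. have hh := subset_leq_card cb'. by rewrite addnS ltnS subnKC.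
suff [D [DA Dch Dup Dcard]] : exists D : {set {set T}},
   [/\ D \subset A, forall x y, x \in D -> y \in D -> (x \subset y) || (y \subset x),
       forall d, d \in D -> a \subset d & #|D| = (#|b| - #|a|).+1].
  have H : (#|b| - #|a|).+1 <= \max_(C | is_chain A (@revincl T) C && [forall c in C, revincl c a]) #|C|.
    rewrite -Dcard; apply: (@leq_bigmax_cond _ (fun C : {set {set T}} => is_chain A (@revincl T) C && [forall c in C, revincl c a]) (fun C => #|C|) D).
    apply/andP; split.
    rewrite /is_chain DA /=; apply/forallP => x; apply/implyP => xD.
    apply/forallP => y; apply/implyP => yD; rewrite /revincl orbC; exact: Dch.
  by apply/forallP => x; apply/implyP => xD; exact: Dup.
  by rewrite -ltnS (ltn_predK H).
have gen : forall n c, c \in A -> #|b| - #|c| = n -> exists D : {set {set T}},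
   [/\ D \subset A, forall x y, x \in D -> y \in D -> (x \subset y) || (y \subset x),
       forall d, d \in D -> c \subset d & #|D| = n.+1].
  elim=> [|n IH] c cA hc.
    move: (cA); rewrite HA => /and3P[cF cb kc].
    have cE : c = b.
      apply/eqP; rewrite eqEcard cb /=; have := subset_leq_card cb; lia.
    exists [set c]; split.
    - by rewrite sub1set.
    - by move=> x y /set1P-> /set1P->; rewrite subxx.
    - by move=> d /set1P->.
    - by rewrite cards1.
  move: (cA); rewrite HA => /and3P[cF cb kc].
  have cnb : c != b.
    by apply/eqP => E; move: hc; rewrite E subnn.
  have [x xin xF] := ext_filter _ _ cF bF cb cnb.
  move: xin => /setDP[xb xc].
  have xcA : x |: c \in A.
    rewrite HA xF /= subUset sub1set xb cb /=; apply: subset_trans kc _; exact: subsetUr.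
  have cardx : #|x |: c| = #|c|.+1 by rewrite cardsU1 (negbTE xc).
  have [D [DA Dch Dup Dcard]] := IH _ xcA ltac:(rewrite cardx; lia).
  exists (c |: D); split.
  - by rewrite subUset sub1set cA DA.
  - move=> y z /setU1P[->|yD] /setU1P[->|zD].
    + by rewrite subxx.
    + by rewrite (subset_trans (subsetUr _ _) (Dup z zD)).
    + by rewrite (subset_trans (subsetUr _ _) (Dup y yD)) orbT.
    + exact: Dch.
  - move=> d /setU1P[->|dD]; first exact: subxx.
    exact: subset_trans (subsetUr _ _) (Dup d dD).
  - rewrite cardsU1 Dcard.
    have -> : c \notin D.
      apply/negP => cD; have := Dup c cD; rewrite subUset sub1set (negbTE xc) //.
    by [].
exact: gen.
Qed.

Lemma exists_max (A : {set T}) z : z \in A ->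
  exists s, [/\ s \in A, le z s & forall t, t \in A -> le s t -> t = s].
Proof.
move=> zA.
have zP : (z \in A) && le z z by rewrite zA refl.
case: (@arg_minnP _ z (fun x => (x \in A) && le z x) (fun x => #|[set y | le x y]|) zP) => s /andP[sA zs] smin.
exists s; split => // t tA st.
apply/eqP; apply/negP => /negP ts.
have := smin t; rewrite tA (trans _ _ _ zs st) => /(_ isT).
suff : #|[set y | le t y]| < #|[set y | le s y]| by rewrite ltnNge => /negbTE ->.
apply: proper_card; rewrite properEneq; apply/andP; split.
  apply/eqP => E; have : s \in [set y | le t y] by rewrite E inE refl.
  by rewrite inE => lts; move: ts; rewrite (anti _ _ st lts) eqxx.
by apply/subsetP => y; rewrite !inE => /(trans _ _ _ st).
Qed.

End Gen.

Set Implicit Arguments. Unset Strict Implicit. Unset Printing Implicit Defensive.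

Section Spec.
Variables (d : Order.disp_t) (P : finPOrderType d).

Definition fS (U : {set P}) : {set option P} := Some @: U.
Definition gS (U : {set P}) : {set option P} := None |: Some @: U.
Definition hS (W : {set option P}) : {set P} := [set x | Some x \in W].

Lemma SomeI : injective (@Some P).
Proof. by move=> a b [].
Qed.

Lemma inSf U x : (Some x \in fS U) = (x \in U).
Proof. exact: (mem_imset _ _ SomeI). Qed.
Lemma inSg U x : (Some x \in gS U) = (x \in U).
Proof. by rewrite /gS in_setU1 inSf. Qed.
Lemma None_f U : None \notin fS U.
Proof. by apply/imsetP => -[]. Qed.
Lemma None_g U : None \in gS U.
Proof. by rewrite /gS setU11. Qed.
Lemma hS_f U : hS (fS U) = U.
Proof. by apply/setP => x; rewrite inE inSf. Qed.
Lemma hS_g U : hS (gS U) = U.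
Proof. by apply/setP => x; rewrite inE inSg. Qed.
Lemma W_dec (W : {set option P}) : W = if None \in W then gS (hS W) else fS (hS W).
Proof.
case: ifP => nW; apply/setP => -[x|].
- by rewrite inSg inE.
- by rewrite nW None_g.
- by rewrite inSf inE.
- by rewrite nW (negbTE (None_f _)).
Qed.
Lemma card_f U : #|fS U| = #|U|.
Proof. exact: card_imset _ SomeI. Qed.
Lemma card_g U : #|gS U| = #|U|.+1.
Proof. by rewrite /gS cardsU1 -/(fS U) (None_f U) card_f. Qed.

Lemma mem_CE_f k0 k1 U : (fS U \in convex_expansion k0 k1) =
  (U \in FL P) && [forall z in U, ~~ relPK k0 k1 (Some z) None].
Proof.
apply/filterP/andP => [H|[/filterP HU /forallP Hz]].
  split.
    apply/filterP => x y xU lxy; rewrite -inSf; apply: (H (Some x)) => //.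
    by rewrite inSf.
  apply/forallP => z; apply/implyP => zU; apply/negP => r.
  by have := H _ _ (etrans (inSf U z) zU) r; rewrite (negbTE (None_f _)).
move=> [u|] [v|]; rewrite ?inSf ?(negbTE (None_f _)) //= => uU r.
  exact: HU r.
by have := Hz u; rewrite uU /= r.
Qed.

Lemma mem_CE_g k0 k1 U : (gS U \in convex_expansion k0 k1) =
  (U \in FL P) && [forall y, relPK k0 k1 None (Some y) ==> (y \in U)].
Proof.
apply/filterP/andP => [H|[/filterP HU /forallP Hz]].
  split.
    apply/filterP => x y xU lxy; rewrite -inSg; apply: (H (Some x)) => //.
    by rewrite inSg.
  apply/forallP => y; apply/implyP => r; rewrite -inSg; exact: H (None_g U) r.
move=> [u|] [v|]; rewrite ?inSg ?None_g //= => uU r.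
  exact: HU r.
by have := Hz v; rewrite /= r.
Qed.

Let leP := fun x y : P => (x <= y)%O.
Lemma leP_refl : reflexive leP. Proof. by move=> x; rewrite /leP le_refl. Qed.
Lemma leP_trans : transitive leP. Proof. by move=> y x z; rewrite /leP; apply: le_trans. Qed.
Lemma leP_anti x y : leP x y -> leP y x -> x = y.
Proof. by rewrite /leP => a b; apply/le_anti; rewrite a b. Qed.
Let geP := fun x y : P => (y <= x)%O.
Lemma geP_refl : reflexive geP. Proof. by move=> x; rewrite /geP le_refl. Qed.
Lemma geP_trans : transitive geP. Proof. by move=> y x z; rewrite /geP => a b; apply: le_trans b a. Qed.
Lemma geP_anti x y : geP x y -> geP y x -> x = y.
Proof. by rewrite /geP => a b; apply/le_anti; rewrite a b. Qed.

Lemma lo1 k0 z : k0 \in FL P -> [exists s in S0 k0, (z <= s)%O] = (z \notin k0).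
Proof.
move=> /filterP k0F; apply/existsP/idP => [[s /andP[sS zs]]|zk].
  move: sS; rewrite inE => /andP[sk _]; apply: contra sk => zk; exact: k0F zs.
have zA : z \in ~: k0 by rewrite inE.
have [s [sA zs smax]] := @exists_max P leP leP_refl leP_trans leP_anti _ _ zA.
move: zs smax; rewrite /leP => zs smax.
exists s; rewrite zs andbT inE; move: sA; rewrite inE => -> /=.
apply/forallP => t; apply/implyP => /andP[]; rewrite lt_def => /andP[ts st] tk.
by move: ts; rewrite (smax t _ st) ?eqxx // inE.
Qed.

Lemma hi1 k1 y : k1 \in FL P -> [exists s in S1 k1, (s <= y)%O] = (y \in k1).
Proof.
move=> /filterP k1F; apply/existsP/idP => [[s /andP[sS sy]]|yk].
  move: sS; rewrite inE => /andP[sk _]; exact: k1F sy.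
have [s [sA ys smin]] := @exists_max P geP geP_refl geP_trans geP_anti _ _ yk.
move: ys smin; rewrite /geP => ys smin.
exists s; rewrite ys andbT inE sA /=.
apply/forallP => t; apply/implyP => /andP[]; rewrite lt_def => /andP[ts st] tk.
by move: ts; rewrite (smin t tk st) eqxx.
Qed.

Lemma lo0 z : [exists s in S0 (setT : {set P}), (z <= s)%O] = false.
Proof. by apply/existsP => -[s]; rewrite inE inE. Qed.
Lemma hi0 y : [exists s in S1 (set0 : {set P}), (s <= y)%O] = false.
Proof. by apply/existsP => -[s]; rewrite inE inE. Qed.

Lemma relPK_refl (k0 k1 : {set P}) : reflexive (relPK k0 k1).
Proof. by case=> [x|] //=; rewrite le_refl. Qed.

Lemma relPK_trans (k0 k1 : {set P}) :
  (forall z, [exists s in S0 k0, (z <= s)%O] = false) \/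
  (forall y, [exists s in S1 k1, (s <= y)%O] = false) ->
  transitive (relPK k0 k1).
Proof.
move=> H [y|] [x|] [z|] //=.
- exact: le_trans.
- move=> xy /existsP[s /andP[sS ys]]; apply/existsP; exists s.
  by rewrite sS (le_trans xy ys).
- by move=> /existsP[s /andP[sS sx]] xz; apply/existsP; exists s; rewrite sS (le_trans sx xz).
- by case: H => H; rewrite H // andbF.
Qed.

Lemma relPK_anti (k0 k1 : {set P}) :
  (forall z, [exists s in S0 k0, (z <= s)%O] = false) \/
  (forall y, [exists s in S1 k1, (s <= y)%O] = false) ->
  forall x y, relPK k0 k1 x y -> relPK k0 k1 y x -> x = y.
Proof.
move=> H [x|] [y|] //=.
- by move=> a b; congr Some; apply/le_anti; rewrite a b.
- by case: H => H; rewrite H.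
- by case: H => H; rewrite H.
Qed.

End Spec.

Local Open Scope ring_scope.

Lemma sum_setU (T : finType) (A B : {set T}) (F : T -> {poly int}) :
  [disjoint A & B] -> \sum_(i in A :|: B) F i = \sum_(i in A) F i + \sum_(i in B) F i.
Proof. move=> dAB; rewrite -bigU //; apply: eq_bigl => i; by rewrite !inE. Qed.

Arguments fS {d P} U.
Arguments gS {d P} U.
Arguments hS {d P} W.

Section Main.
Variables (d : Order.disp_t) (P : finPOrderType d).

Lemma fS_inj : injective (@fS d P). Proof. exact: can_inj (@hS_f d P). Qed.
Lemma gS_inj : injective (@gS d P). Proof. exact: can_inj (@hS_g d P). Qed.

Lemma gS_notin_f (X : {set {set P}}) U : (gS U \in fS @: X) = false.
Proof.
apply/imsetP => -[V _ E]; have := None_g U; rewrite E.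
by rewrite (negbTE (None_f _)).
Qed.
Lemma fS_notin_g (X : {set {set P}}) U : (fS U \in gS @: X) = false.
Proof.
apply/imsetP => -[V _ E]; have := None_g V; rewrite -E.
by rewrite (negbTE (None_f _)).
Qed.

Lemma disj_fg (X Y : {set {set P}}) : [disjoint fS @: X & gS @: Y].
Proof.
apply/pred0P => W /=; apply/negbTE/negP => /andP[/imsetP[U _ ->]].
by rewrite fS_notin_g.
Qed.

Lemma setT_filter (T : finType) (le : rel T) : setT \in filters le.
Proof. by apply/filterP => x y; rewrite !inE. Qed.

Lemma hgen (A : {set {set P}}) (b k a : {set P}) :
  b \in FL P ->
  (forall c, (c \in A) = [&& c \in FL P, c \subset b & k \subset c]) ->
  a \in A -> height A (@revincl P) a = (#|b| - #|a|)%N.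
Proof.
exact: (@height_filters P _ (@leP_refl d P) (@leP_trans d P) (@leP_anti d P)).
Qed.

Lemma hFL U : U \in FL P -> height (FL P) (@revincl P) U = (#|P| - #|U|)%N.
Proof.
move=> UF; have HA : forall c, (c \in FL P) = [&& c \in FL P, c \subset setT & set0 \subset c].
  by move=> c; rewrite subsetT sub0set !andbT.
by rewrite (@hgen _ setT set0 _ (setT_filter _) HA UF) cardsT.
Qed.

Lemma hI k0 k1 U : k0 \in FL P -> U \in lat_interval k0 k1 ->
  height (lat_interval k0 k1) (@revincl P) U = (#|k0| - #|U|)%N.
Proof.
move=> k0F UI; rewrite (@hgen _ k0 k1) //.
by move=> c; rewrite inE.
Qed.

Lemma hCE k0 k1 W :
  (forall z, [exists s in S0 k0, (z <= s)%O] = false) \/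
  (forall y, [exists s in S1 k1, (s <= y)%O] = false) ->
  W \in convex_expansion k0 k1 ->
  height (convex_expansion k0 k1) (@revincl (option P)) W = (#|P|.+1 - #|W|)%N.
Proof.
move=> H WC.
have HA : forall c, (c \in convex_expansion k0 k1) = [&& c \in filters (relPK k0 k1), c \subset setT & set0 \subset c].
  by move=> c; rewrite subsetT sub0set !andbT.
by rewrite (@height_filters _ _ (@relPK_refl d P k0 k1) (@relPK_trans d P k0 k1 H)
   (@relPK_anti d P k0 k1 H) _ setT set0 _ (setT_filter _) HA WC) cardsT card_option.
Qed.

End Main.

Unset Implicit Arguments. Set Strict Implicit.

Theorem corollary5 (d : Order.disp_t) (P : finPOrderType d) (k0 k1 : {set P}) :
  is_cutting k0 k1 ->
  (k1 = set0 ->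
     rank_gen (convex_expansion k0 k1) (@revincl (option P)) =
     rank_gen (@FL _ P) (@revincl P) +
     'X^((height (@FL _ P) (@revincl P) k0).+1) *
       rank_gen (lat_interval k0 k1) (@revincl P)) /\
  (k0 = setT ->
     rank_gen (convex_expansion k0 k1) (@revincl (option P)) =
     rank_gen (lat_interval k0 k1) (@revincl P) + 'X * rank_gen (@FL _ P) (@revincl P)).
Proof.
case=> k0F k1F _ _.
have RFL : rank_gen (FL P) (@revincl P) = \sum_(U in FL P) 'X^(#|P| - #|U|).
  by apply: eq_bigr => U UF; rewrite hFL.
split => E.
- subst k1.
  have Hpo : (forall z, [exists s in S0 k0, (z <= s)%O] = false) \/
             (forall y, [exists s in S1 (set0 : {set P}), (s <= y)%O] = false).
    by right; exact: hi0.
  have CEeq : convex_expansion k0 set0 = fS @: lat_interval k0 set0 :|: gS @: FL P.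
    apply/setP => W; rewrite in_setU (W_dec W); case: ifP => _; move: (hS W) => U.
    + rewrite gS_notin_f (mem_imset _ _ (@gS_inj _ _)) mem_CE_g /=.
      case: (U \in FL P) => //=; apply/forallP => y; by rewrite hi0.
    + rewrite fS_notin_g orbF (mem_imset _ _ (@fS_inj _ _)) mem_CE_f [X in _ = X]inE /revincl sub0set andbT.
      congr (_ && _); apply/forallP/subsetP => H z.
        by move=> zU; move: (H z); rewrite zU /= (lo1 _ k0F) negbK.
      by apply/implyP => zU; rewrite /= (lo1 _ k0F) negbK H.
  have RCE : rank_gen (convex_expansion k0 set0) (@revincl (option P)) =
     \sum_(W in convex_expansion k0 set0) 'X^(#|P|.+1 - #|W|).
    by apply: eq_bigr => W WC; rewrite hCE.
  have RI : rank_gen (lat_interval k0 set0) (@revincl P) =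
     \sum_(U in lat_interval k0 set0) 'X^(#|k0| - #|U|).
    by apply: eq_bigr => U UI; rewrite hI.
  rewrite RCE RFL RI CEeq sum_setU ?disj_fg // big_imset; last by move=> x y _ _ /fS_inj.
  rewrite big_imset; last by move=> x y _ _ /gS_inj.
  rewrite (hFL k0F) mulr_sumr addrC; congr (_ + _); apply: eq_bigr => U UI.
    by rewrite card_g subSS.
  rewrite card_f -exprD; congr (_ ^+ _).
  move: UI; rewrite inE => /and3P[_ Uk _].
  have h1 := subset_leq_card Uk. have h2 : (#|k0| <= #|P|)%N := max_card _. lia.
- subst k0.
  have Hpo : (forall z, [exists s in S0 (setT : {set P}), (z <= s)%O] = false) \/
             (forall y, [exists s in S1 k1, (s <= y)%O] = false).
    by left; exact: lo0.
  have CEeq : convex_expansion setT k1 = fS @: FL P :|: gS @: lat_interval setT k1.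
    apply/setP => W; rewrite in_setU (W_dec W); case: ifP => _; move: (hS W) => U.
    + rewrite gS_notin_f (mem_imset _ _ (@gS_inj _ _)) mem_CE_g /= [X in _ = X]inE /revincl subsetT /=.
      congr (_ && _); apply/forallP/subsetP => H y.
        by move=> yk; move: (H y); rewrite /= (hi1 _ k1F) yk.
      by apply/implyP; rewrite /= (hi1 _ k1F) => /H.
    + rewrite fS_notin_g orbF (mem_imset _ _ (@fS_inj _ _)) mem_CE_f.
      case: (U \in FL P) => //=; apply/forallP => z; by rewrite lo0 implybT.
  have RCE : rank_gen (convex_expansion setT k1) (@revincl (option P)) =
     \sum_(W in convex_expansion setT k1) 'X^(#|P|.+1 - #|W|).
    by apply: eq_bigr => W WC; rewrite hCE.
  have RI : rank_gen (lat_interval setT k1) (@revincl P) =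
     \sum_(U in lat_interval setT k1) 'X^(#|P| - #|U|).
    by apply: eq_bigr => U UI; rewrite hI ?cardsT //; exact: setT_filter.
  rewrite RCE RFL RI CEeq sum_setU ?disj_fg // big_imset; last by move=> x y _ _ /fS_inj.
  rewrite big_imset; last by move=> x y _ _ /gS_inj.
  rewrite mulr_sumr addrC; congr (_ + _); apply: eq_bigr => U UI.
    by rewrite card_g subSS.
  rewrite card_f -exprS; congr (_ ^+ _).
  have h2 : (#|U| <= #|P|)%N := max_card _. lia.
Qed.
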